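(* Let $\mathcal C$ be a clustering problem (with $|\mathcal X|\ge2$), let $t\in\mathbb N$, and let $N_1,\dots,N_K\ge1$ be integers with $\sum_iN_i=t$. For each $i\in[K]$ let $\tilde x_i=(\tilde x_{i,1},\dots,\tilde x_{i,N_i})\in\mathcal X^{N_i}$, let $\hat P_i$ be its empirical distribution, $\hat P=(\hat P_1,\dots,\hat P_K)$, and $w=(N_1/t,\dots,N_K/t)$. For $\sigma\in\mathcal C$ let $L_\sigma=\sup_{Q\in\Lambda_\sigma}\prod_{i=1}^K\prod_{n=1}^{N_i}Q_i(\tilde x_{i,n})$, and for $\sigma_1,\sigma_2\in\mathcal C$ let $Z_{\sigma_1,\sigma_2}=\log\frac{L_{\sigma_1}}{L_{\sigma_2}}$. Let $\hat\sigma\in\arg\min_{\sigma\in\mathcal C}g_{\hat P}^\sigma(w)$. Then each $L_\sigma\in(0,\infty)$ and $$\max_{\sigma\in\mathcal C}\min_{\sigma'\in\mathcal C\setminus\{\sigma\}}Z_{\sigma,\sigma'}=t\,G_{\hat P}^{\hat\sigma}(w)-t\,g_{\hat P}^{\hat\sigma}(w),$$ and the maximum on the left-hand side is attained at $\sigma=\hat\sigma$.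
   Context: Framework. Let $\mathcal X$ be a finite alphabet with $|\mathcal X|\ge2$, $\mathcal P(\mathcal X)$ the set of probability distributions on $\mathcal X$, and $K\ge2$ an integer (number of arms); $[n]=\{1,\dots,n\}$. A hypothesis is a collection $\sigma=\{\mathcal A_1^\sigma,\dots,\mathcal A_{M_\sigma}^\sigma\}$ ($M_\sigma\ge1$) of pairwise disjoint subsets of $[K]$, each of cardinality at least 2 (clusters); let $\mathcal A^\sigma_{M_\sigma+1}=[K]\setminus\bigcup_{m\le M_\sigma}\mathcal A_m^\sigma$ (unconstrained group, possibly empty). $\Lambda_\sigma$ is the set of $P\in\mathcal P(\mathcal X)^K$ with $P_i=P_j$ whenever $i,j\in\mathcal A_m^\sigma$ for some $m\le M_\sigma$, and $P_i\neq P_j$ whenever $i\in\mathcal A_{m_1}^\sigma$, $j\in\mathcal A_{m_2}^\sigma$ with $m_1\ne m_2\in[M_\sigma+1]$. A clustering problem is a finite set $\mathcal C$ of hypotheses with $|\mathcal C|\ge2$. Functions. $D(P\|Q)$ is the KL divergence. For $\mathcal A\subseteq[K]$, $G(P_{\mathcal A},w_{\mathcal A})=0$ if $w_i=0$ for all $i\in\mathcal A$, and otherwise $G(P_{\mathcal A},w_{\mathcal A})=\sum_{i\in\mathcal A}w_iD(P_i\|W)$ with $W=\sum_{i\in\mathcal A}w_iP_i/\sum_{i\in\mathcal A}w_i$. For $\sigma\in\mathcal C$, $g_P^\sigma(w)=\sum_{m=1}^{M_\sigma}G(P_{\mathcal A_m^\sigma},w_{\mathcal A_m^\sigma})$ and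 $G_P^\sigma(w)=\min_{\sigma'\in\mathcal C\setminus\{\sigma\}}g_P^{\sigma'}(w)$. The empirical distribution of $x^n$ is $\hat P_{x^n}(a)=\frac1n\sum_{k=1}^n1\{x_k=a\}$. *)

(* Defs.v *)
From HB Require Import structures.
From mathcomp Require Import all_boot all_order all_algebra.
From mathcomp Require Import all_classical all_reals all_analysis.
Set Implicit Arguments. Unset Strict Implicit. Unset Printing Implicit Defensive.
Import Order.TTheory GRing.Theory Num.Theory.
Local Open Scope ring_scope.
Local Open Scope classical_set_scope.

Section Defs.
Variables (R : realType) (X : finType) (K : nat).

Definition is_dist (P : {ffun X -> R}) : Prop :=
  (forall a, 0 <= P a) /\ \sum_(a : X) P a = 1.

Definition is_hypothesis (s : {set {set 'I_K}}) : Prop :=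
  (0 < #|s|)%N /\ finset.trivIset s /\ (forall A, A \in s -> (1 < #|A|)%N).

Definition same_cluster (s : {set {set 'I_K}}) (i j : 'I_K) : Prop :=
  exists2 A, A \in s & (i \in A) && (j \in A).

(* i and j lie in the same group among the M+1 groups
   (clusters plus the unconstrained group [K] \ finset.cover s) *)
Definition same_group (s : {set {set 'I_K}}) (i j : 'I_K) : Prop :=
  same_cluster s i j \/ (i \notin finset.cover s /\ j \notin finset.cover s).

Definition Lambda (s : {set {set 'I_K}}) : set ('I_K -> {ffun X -> R}) :=
  [set Q | (forall i, is_dist (Q i)) /\
           (forall i j, same_cluster s i j -> Q i = Q j) /\
           (forall i j, ~ same_group s i j -> Q i <> Q j)].

(* KL divergence D(P||Q), with the convention 0 log 0 = 0 *)
Definition KL (P Q : {ffun X -> R}) : R :=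
  \sum_(a | 0 < P a) P a * ln (P a / Q a).

Definition Gfun (P : 'I_K -> {ffun X -> R}) (w : 'I_K -> R) (A : {set 'I_K}) : R :=
  if [forall i in A, w i == 0] then 0
  else let sw := \sum_(i in A) w i in
       let W : {ffun X -> R} := [ffun a => (\sum_(i in A) w i * P i a) / sw] in
       \sum_(i in A) w i * KL (P i) W.

Definition gfun (s : {set {set 'I_K}}) (P : 'I_K -> {ffun X -> R}) (w : 'I_K -> R) : R :=
  \sum_(A in s) Gfun P w A.

Definition Gmin (C : {set {set {set 'I_K}}}) (s : {set {set 'I_K}})
    (P : 'I_K -> {ffun X -> R}) (w : 'I_K -> R) : R :=
  inf [set gfun s' P w | s' in [set s' | s' \in C :\ s]].

Definition empirical (xs : seq X) : {ffun X -> R} :=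
  [ffun a => (count_mem a xs)%:R / (size xs)%:R].

Definition Lik (s : {set {set 'I_K}}) (N : 'I_K -> nat)
    (xs : forall i : 'I_K, (N i).-tuple X) : \bar R :=
  ereal_sup [set (\prod_(i < K) \prod_(x <- xs i) Q i x)%:E | Q in Lambda s].

Definition Zstat (s1 s2 : {set {set 'I_K}}) (N : 'I_K -> nat)
    (xs : forall i : 'I_K, (N i).-tuple X) : R :=
  ln (fine (Lik s1 xs) / fine (Lik s2 xs)).

Definition Zmin (C : {set {set {set 'I_K}}}) (s : {set {set 'I_K}}) (N : 'I_K -> nat)
    (xs : forall i : 'I_K, (N i).-tuple X) : R :=
  inf [set Zstat s s' xs | s' in [set s' | s' \in C :\ s]].

End Defs.

(* Main.v *)
Require Import Defs.
From HB Require Import structures.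
From mathcomp Require Import all_boot all_order all_algebra.
From mathcomp Require Import all_classical all_reals all_analysis.
From mathcomp Require Import ring lra.
Set Implicit Arguments. Unset Strict Implicit. Unset Printing Implicit Defensive.
Import Order.TTheory GRing.Theory Num.Theory.
Local Open Scope ring_scope.
Local Open Scope classical_set_scope.

Section Gen.
Variable R : realType.

Lemma prod_count (X : finType) (F : X -> R) (r : seq X) :
  \prod_(x <- r) F x = \prod_(a : X) F a ^+ count_mem a r.
Proof.
elim: r => [|x r IH]; first by rewrite big_nil; apply/esym/big1 => a _; rewrite expr0.
rewrite big_cons IH /=.
under [RHS]eq_bigr => a _ do rewrite exprD.
rewrite big_split /=; congr (_ * _).
rewrite (bigD1 x) //= eqxx expr1 big1 ?mulr1 // => a; rewrite eq_sym => /negbTE ->; by rewrite expr0.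
Qed.

Lemma sum_count (X : finType) (r : seq X) :
  (\sum_(a : X) count_mem a r)%N = size r.
Proof.
elim: r => [|x r IH]; first by rewrite big1.
rewrite /= big_split /= IH (bigD1 x) //= eqxx big1 ?addn0 // => a; rewrite eq_sym => /negbTE ->.
by [].
Qed.

Lemma ln_prod (I : Type) (r : seq I) (P : pred I) (F : I -> R) :
  (forall i, P i -> 0 < F i) ->
  ln (\prod_(i <- r | P i) F i) = \sum_(i <- r | P i) ln (F i).
Proof.
move=> HF; elim: r => [|x r IH]; first by rewrite !big_nil ln1.
rewrite !big_cons; case: ifP => Px //.
rewrite lnM ?IH //; rewrite posrE ?HF //.
by apply: prodr_gt0 => i /HF.
Qed.

Lemma bernoulli_ineq (e : R) (n : nat) : 0 <= e <= 1 -> 1 - e *+ n <= (1 - e) ^+ n.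
Proof.
move=> /andP[e0 e1]; elim: n => [|n IH]; first by rewrite expr0 mulr0n subr0.
rewrite exprS mulrSr.
have h1 : 0 <= 1 - e by rewrite subr_ge0.
apply: le_trans (_ : (1 - e) * (1 - e *+ n) <= _); last by apply: ler_wpM2l.
have h2 : 0 <= e * (e *+ n) by rewrite mulr_ge0 // mulrn_wge0.
rewrite mulrBl mul1r mulrBr mulr1; lra.
Qed.

Lemma inf_attained (S : set R) (m : R) : S m -> (forall x, S x -> m <= x) -> inf S = m.
Proof.
move=> Sm Hm; apply/le_anti/andP; split.
- rewrite /inf lerNl; apply: sup_upper_bound; last by exists m.
  split; first by exists (- m), m.
  exists (- m) => _ [y Sy <-]; by rewrite lerN2 Hm.
- apply: lb_le_inf; first by exists m.
  by move=> x Sx; apply: Hm.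
Qed.

Lemma sup_attained (S : set R) (m : R) : S m -> (forall x, S x -> x <= m) -> sup S = m.
Proof.
move=> Sm Hm; apply/le_anti/andP; split.
- by apply: ge_sup; [exists m | move=> x Sx; apply: Hm].
- apply: sup_upper_bound => //; split; first by exists m.
  by exists m => x Sx; apply: Hm.
Qed.

Lemma argmin_exists (T : finType) (D : {set T}) (f : T -> R) (i0 : T) :
  i0 \in D -> exists2 s0, s0 \in D & forall s, s \in D -> f s0 <= f s.
Proof.
move=> Di0; case: (arg_minP f Di0) => s0 Ds0 H; exists s0 => //.
Qed.

End Gen.

Section Gibbs.
Variable R : realType.

Lemma ln_le_sub1 (y : R) : 0 < y -> ln y <= y - 1.
Proof.
move=> y0; have := @le_ln1Dx R (y - 1); rewrite (addrC 1 (y - 1)) subrK; apply.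
by rewrite ltrBrDr addrC subrr.
Qed.

Lemma prod_restr (X : finType) (m : X -> nat) (F : X -> R) :
  \prod_(a : X) F a ^+ m a = \prod_(a | (0 < m a)%N) F a ^+ m a.
Proof.
rewrite [RHS]big_mkcond; apply: eq_bigr => a _; case: ifP => // /negbT.
by rewrite -eqn0Ngt => /eqP ->; rewrite expr0.
Qed.

Lemma gibbs (X : finType) (m : X -> nat) (q : X -> R) :
  (forall a, 0 <= q a) -> \sum_(a : X) q a <= 1 -> (0 < \sum_(b : X) m b)%N ->
  \prod_(a : X) q a ^+ m a <= \prod_(a : X) ((m a)%:R / (\sum_(b : X) m b)%:R) ^+ m a.
Proof.
move=> q0 q1 T0.
set T := (\sum_(b : X) m b)%N.
have T0' : (0 : R) < T%:R by rewrite ltr0n.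
have RHS0 : (0 : R) <= \prod_(a : X) ((m a)%:R / T%:R) ^+ m a.
  by apply: prodr_ge0 => a _; apply: exprn_ge0; rewrite divr_ge0.
case: (boolP [exists a, (0 < m a)%N && (q a == 0)]).
  move/existsP => [a /andP[ma /eqP qa]].
  rewrite (bigD1 a) //= qa expr0n.
  have -> : (m a == 0%N) = false by rewrite lt0n in ma; exact: negbTE.
  by rewrite mul0r.
move/existsPn => Hq.
have qpos : forall a, (0 < m a)%N -> 0 < q a.
  move=> a ma; have := Hq a; rewrite ma /= => qa.
  by rewrite lt_def qa q0.
have ppos : forall a, (0 < m a)%N -> (0 : R) < (m a)%:R / T%:R.
  by move=> a ma; rewrite divr_gt0 // ltr0n.
rewrite !(prod_restr m).
rewrite -ler_ln ?posrE; last first.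
- by apply: prodr_gt0 => a ma; apply: exprn_gt0; first [exact: (ppos a ma) | exact: (qpos a ma)].
- by apply: prodr_gt0 => a ma; apply: exprn_gt0; first [exact: (ppos a ma) | exact: (qpos a ma)].
rewrite !ln_prod; last first.
- by move=> a ma; apply: exprn_gt0; first [exact: (ppos a ma) | exact: (qpos a ma)].
- by move=> a ma; apply: exprn_gt0; first [exact: (ppos a ma) | exact: (qpos a ma)].
rewrite -subr_le0 -sumrB.
apply: (@le_trans _ _ (\sum_(a | (0 < m a)%N) (T%:R * q a - (m a)%:R))).
  apply: ler_sum => a ma.
  rewrite !lnXn ?qpos ?ppos // -mulrnBl.
  have hm : (0 : R) < (m a)%:R by rewrite ltr0n.
  have -> : T%:R * q a - (m a)%:R = (q a / ((m a)%:R / T%:R) - 1) *+ m a.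
    rewrite -[RHS]mulr_natr mulrBl mul1r; congr (_ - _).
    field; rewrite ?gt_eqF //.
  apply: ler_wMn2r; rewrite -ln_div ?posrE ?qpos ?ppos //.
  by apply: ln_le_sub1; rewrite divr_gt0 ?qpos ?ppos.
rewrite sumrB -mulr_sumr.
have -> : \sum_(a | (0 < m a)%N) ((m a)%:R : R) = T%:R.
  rewrite /T natr_sum big_mkcond /=; apply: eq_bigr => a _.
  by case: ifP => // /negbT; rewrite -eqn0Ngt => /eqP ->.
have hs : \sum_(a | (0 < m a)%N) q a <= 1.
  apply: le_trans q1; rewrite [X in _ <= X](bigID (fun a => (0 < m a)%N)) /=.
  by rewrite lerDl sumr_ge0.
rewrite subr_le0 -{2}[T%:R]mulr1; apply: ler_wpM2l => //; exact: ltW.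
Qed.

End Gibbs.

Lemma prod_cst_seq (R : realType) (T : Type) (r : seq T) (c : R) :
  \prod_(x <- r) c = c ^+ size r.
Proof. by elim: r => [|x r IH]; rewrite ?big_nil ?expr0 // big_cons IH exprS. Qed.

Lemma prod_pow_ge0 (R : realType) (X : finType) (F : X -> R) (m : X -> nat) :
  (forall a, 0 <= F a) -> 0 <= \prod_(a : X) F a ^+ m a.
Proof. by move=> H; apply: prodr_ge0 => a _; apply: exprn_ge0. Qed.

Lemma dist_le1 (R : realType) (X : finType) (q : {ffun X -> R}) a :
  is_dist q -> q a <= 1.
Proof.
case=> q0 <-; rewrite (bigD1 a) //= lerDl; by apply: sumr_ge0.
Qed.

Section Main.
Variables (R : realType) (X : finType) (K : nat).
Variables (N : 'I_K -> nat) (xs : forall i : 'I_K, (N i).-tuple X).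
Hypothesis Npos : forall i, (0 < N i)%N.

Definition nn i a := count_mem a (xs i).
Definition tt := (\sum_(i < K) N i)%N.
Definition Phat0 i : {ffun X -> R} := empirical R (xs i).
Definition ww i : R := (N i)%:R / tt%:R.

Definition Wf (A : {set 'I_K}) : {ffun X -> R} :=
  [ffun a => (\sum_(i in A) ww i * Phat0 i a) / (\sum_(i in A) ww i)].

Definition Qs (s : {set {set 'I_K}}) i : {ffun X -> R} :=
  if i \in finset.cover s then Wf (finset.pblock s i) else Phat0 i.

Definition Mval s : R := \prod_(i < K) \prod_(a : X) Qs s i a ^+ nn i a.

Lemma sum_nn i : (\sum_(a : X) nn i a)%N = N i.
Proof. by rewrite /nn sum_count size_tuple. Qed.

Lemma tt_gt0 : (0 < K)%N -> (0 < tt)%N.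
Proof.
move=> K0; rewrite /tt (bigD1 (Ordinal K0)) //=.
by rewrite ltn_addr.
Qed.

Lemma Phat_val i a : Phat0 i a = (nn i a)%:R / (N i)%:R.
Proof. by rewrite /Phat0 /empirical ffunE size_tuple. Qed.

Lemma Wf_val (K0 : (0 < K)%N) A a :
  Wf A a = (\sum_(i in A) nn i a)%:R / (\sum_(i in A) N i)%:R.
Proof.
have t0 : (tt%:R : R) != 0 by rewrite pnatr_eq0 -lt0n tt_gt0.
rewrite /Wf ffunE.
have -> : \sum_(i in A) ww i * Phat0 i a = (\sum_(i in A) nn i a)%:R / tt%:R.
  rewrite natr_sum mulr_suml; apply: eq_bigr => i _.
  rewrite /ww Phat_val; have : (N i)%:R != (0 : R) by rewrite pnatr_eq0 -lt0n Npos.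
  move=> h; field; by rewrite h t0.
have -> : \sum_(i in A) ww i = (\sum_(i in A) N i)%:R / tt%:R.
  by rewrite natr_sum mulr_suml.
by rewrite invf_div mulrA divfK.
Qed.

Lemma Qs_ge0 (K0 : (0 < K)%N) s i a : 0 <= Qs s i a.
Proof.
rewrite /Qs; case: ifP => _; rewrite ?Wf_val ?Phat_val //; exact: divr_ge0.
Qed.

Lemma split_prod s (F : 'I_K -> R) : finset.trivIset s ->
  \prod_(i < K) F i =
  (\prod_(A in s) \prod_(i in A) F i) * \prod_(i < K | i \notin finset.cover s) F i.
Proof.
by move=> tri; rewrite (bigID (fun i => i \in finset.cover s)) /= -finset.big_trivIset.
Qed.

Lemma split_sum s (F : 'I_K -> R) : finset.trivIset s ->
  \sum_(i < K) F i =
  (\sum_(A in s) \sum_(i in A) F i) + \sum_(i < K | i \notin finset.cover s) F i.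
Proof.
by move=> tri; rewrite (bigID (fun i => i \in finset.cover s)) /= -finset.big_trivIset.
Qed.

Lemma in_cover (s : {set {set 'I_K}}) (A : {set 'I_K}) i : A \in s -> i \in A -> i \in finset.cover s.
Proof. by move=> As iA; apply/bigcupP; exists A. Qed.

Lemma Qs_cluster s A i : finset.trivIset s -> A \in s -> i \in A -> Qs s i = Wf A.
Proof.
by move=> tri As iA; rewrite /Qs (in_cover As iA) (finset.def_pblock tri As iA).
Qed.

Lemma Qs_out s i : i \notin finset.cover s -> Qs s i = Phat0 i.
Proof. by rewrite /Qs => /negbTE ->. Qed.

Lemma UB (K0 : (0 < K)%N) s : is_hypothesis s ->
  forall Q : 'I_K -> {ffun X -> R}, (forall i, is_dist (Q i)) ->
  (forall i j, same_cluster s i j -> Q i = Q j) ->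
  \prod_(i < K) \prod_(x <- xs i) Q i x <= Mval s.
Proof.
move=> [_ [tri card2]] Q Qd Qc.
have Qge0 : forall i a, 0 <= Q i a by move=> i a; case: (Qd i) => h _; exact: h.
under eq_bigr do rewrite prod_count.
rewrite /Mval !(split_prod _ tri).
apply: ler_pM.
- by apply: prodr_ge0 => A _; apply: prodr_ge0 => i _; apply: prod_pow_ge0.
- by apply: prodr_ge0 => i _; apply: prod_pow_ge0.
- apply: ler_prod => A As; apply/andP; split.
    by apply: prodr_ge0 => i _; apply: prod_pow_ge0.
  have : (0 < #|A|)%N by apply: ltn_trans (card2 _ As).
  case/card_gt0P => j jA.
  have -> : \prod_(i in A) \prod_(a : X) Q i a ^+ count_mem a (xs i) =
            \prod_(a : X) Q j a ^+ (\sum_(i in A) nn i a).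
    rewrite exchange_big /=; apply: eq_bigr => a _.
    rewrite -prodrXr; apply: eq_bigr => i iA.
    by rewrite (Qc i j) //; exists A => //; rewrite iA jA.
  have -> : \prod_(i in A) \prod_(a : X) Qs s i a ^+ nn i a =
            \prod_(a : X) Wf A a ^+ (\sum_(i in A) nn i a).
    rewrite exchange_big /=; apply: eq_bigr => a _.
    rewrite -prodrXr; apply: eq_bigr => i iA.
    by rewrite (Qs_cluster tri As iA).
  under [X in _ <= X]eq_bigr do rewrite (Wf_val K0).
  have hsum : (\sum_(b : X) (\sum_(i in A) nn i b))%N = (\sum_(i in A) N i)%N.
    by rewrite exchange_big /=; apply: eq_bigr => i _; rewrite sum_nn.
  have G := @gibbs R X (fun a => (\sum_(i in A) nn i a)%N) (Q j) (Qge0 j).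
  rewrite /= hsum in G; apply: G.
    by case: (Qd j) => _ ->.
  by rewrite (bigD1 j) //= ltn_addr.
- apply: ler_prod => i iout; apply/andP; split; first exact: prod_pow_ge0.
  rewrite (Qs_out iout).
  under [X in _ <= X]eq_bigr do rewrite Phat_val.
  have := @gibbs R X (nn i) (Q i) (Qge0 i).
  rewrite sum_nn; apply; first by case: (Qd i) => _ ->.
  exact: Npos.
Qed.


Lemma Qs_dist (K0 : (0 < K)%N) s i : is_dist (Qs s i).
Proof.
split; first exact: Qs_ge0.
rewrite /Qs; case: ifP => iC.
  under eq_bigr do rewrite (Wf_val K0).
  rewrite -mulr_suml -natr_sum exchange_big /=.
  under eq_bigr do rewrite sum_nn.
  apply: divff; rewrite pnatr_eq0 -lt0n (bigD1 i) ?mem_pblock //= ltn_addr //.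
under eq_bigr do rewrite Phat_val.
rewrite -mulr_suml -natr_sum sum_nn divff // pnatr_eq0 -lt0n Npos //.
Qed.

Lemma Qs_le1 (K0 : (0 < K)%N) s i a : Qs s i a <= 1.
Proof. exact: dist_le1 (Qs_dist K0 s i). Qed.

Definition rep (s : {set {set 'I_K}}) i : 'I_K :=
  if i \in finset.cover s then odflt i [pick j in finset.pblock s i] else i.

Lemma rep_in s i : i \in finset.cover s -> rep s i \in finset.pblock s i.
Proof.
move=> iC; rewrite /rep iC; case: pickP => [j //|H].
by have := H i; rewrite /= mem_pblock iC.
Qed.

Lemma rep_same s i j : finset.trivIset s -> same_cluster s i j ->
  rep s i = rep s j /\ Qs s i = Qs s j.
Proof.
move=> tri [A As /andP[iA jA]]; split; last first.
  by rewrite (Qs_cluster tri As iA) (Qs_cluster tri As jA).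
rewrite /rep (in_cover As iA) (in_cover As jA).
rewrite (finset.def_pblock tri As iA) (finset.def_pblock tri As jA).
by case: pickP => [k _ //| H]; have := H i; rewrite /= iA.
Qed.

Lemma rep_cover s i : i \in finset.cover s -> rep s i \in finset.cover s.
Proof.
move=> iC; apply: (in_cover (pblock_mem iC)); exact: rep_in.
Qed.

Lemma rep_diff s i j : finset.trivIset s -> ~ same_group s i j -> rep s i != rep s j.
Proof.
move=> tri ng; apply/eqP => E; apply: ng.
case: (boolP (i \in finset.cover s)) => iC; case: (boolP (j \in finset.cover s)) => jC.
- left; exists (finset.pblock s i); first exact: pblock_mem.
  rewrite mem_pblock iC /=.
  have e1 := same_pblock tri (rep_in iC).
  have e2 := same_pblock tri (rep_in jC).
  by rewrite -e1 E e2 mem_pblock.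
- by move: (rep_cover iC); rewrite E /rep (negbTE jC) (negbTE jC).
- by move: (rep_cover jC); rewrite -E /rep (negbTE iC) (negbTE iC).
- by right.
Qed.

Variables (a0 a1 : X).
Hypothesis a01 : a0 != a1.

Definition cc (k : 'I_K) : R := (k.+1)%:R / (K.+1)%:R.

Lemma cc01 k : 0 <= cc k <= 1.
Proof.
rewrite /cc divr_ge0 //= ler_pdivrMr ?ltr0n // mul1r ler_nat.
by rewrite ltnS ltnW.
Qed.

Lemma cc_inj k k' : cc k = cc k' -> k = k'.
Proof.
rewrite /cc => /(mulIf _) h; apply: val_inj.
have : (k.+1)%:R = (k'.+1)%:R :> R by apply: h; rewrite invr_eq0 pnatr_eq0.
by move/eqP; rewrite eqr_nat => /eqP [].
Qed.

Definition Vd (k : 'I_K) : {ffun X -> R} :=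
  [ffun a => (a == a0)%:R * cc k + (a == a1)%:R * (1 - cc k)].

Lemma Vd_dist k : is_dist (Vd k).
Proof.
have /andP[c0 c1] := cc01 k.
split=> [a|]; first by rewrite ffunE addr_ge0 // mulr_ge0 // ?subr_ge0.
under eq_bigr do rewrite ffunE.
rewrite big_split /= -!mulr_suml.
have h : forall b : X, \sum_(a : X) ((a == b)%:R : R) = 1.
  by move=> b; rewrite (bigD1 b) //= eqxx big1 ?addr0 // => a /negbTE ->.
by rewrite !h !mul1r subrKC.
Qed.

Lemma Vd_a0 k : Vd k a0 = cc k.
Proof. by rewrite ffunE eqxx (negbTE a01) mul1r mul0r addr0. Qed.

Definition Qe s (e : R) i : {ffun X -> R} :=
  [ffun a => (1 - e) * Qs s i a + e * Vd (rep s i) a].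

Lemma Qe_val s e i a : Qe s e i a = (1 - e) * Qs s i a + e * Vd (rep s i) a.
Proof. by rewrite /Qe ffunE. Qed.

Definition eta0 s : R := \prod_(p : 'I_K * 'I_K * X | Qs s p.1.1 p.2 != Qs s p.1.2 p.2)
   `|Qs s p.1.1 p.2 - Qs s p.1.2 p.2|.

Lemma eta0_prop (K0 : (0 < K)%N) s : 0 < eta0 s /\ eta0 s <= 1 /\
  forall i j a, Qs s i a != Qs s j a -> eta0 s <= `|Qs s i a - Qs s j a|.
Proof.
have fac : forall p : 'I_K * 'I_K * X, Qs s p.1.1 p.2 != Qs s p.1.2 p.2 ->
    0 <= `|Qs s p.1.1 p.2 - Qs s p.1.2 p.2| <= 1.
  move=> p _; rewrite normr_ge0 /= ler_norml.
  have := Qs_ge0 K0 s p.1.1 p.2; have := Qs_ge0 K0 s p.1.2 p.2.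
  have := Qs_le1 K0 s p.1.1 p.2; have := Qs_le1 K0 s p.1.2 p.2.
  move=> h1 h2 h3 h4; apply/andP; split; lra.
split; first by apply: prodr_gt0 => p hp; rewrite normr_gt0 subr_eq0.
split; first exact: prodr_ile1.
move=> i j a hne; rewrite /eta0 (bigD1 (i, j, a)) //=.
rewrite -[X in _ <= X]mulr1; apply: ler_wpM2l => //.
apply: prodr_ile1 => p /andP[hp _]; exact: fac.
Qed.

Lemma Qe_Lambda (K0 : (0 < K)%N) s e : is_hypothesis s -> 0 < e -> e < eta0 s / 2 ->
  @Lambda R X K s (Qe s e).
Proof.
move=> [_ [tri _]] e0 eeta.
have [et0 [et1 etb]] := eta0_prop K0 s.
have e1 : e < 1 / 2 by apply: lt_le_trans eeta _; rewrite ler_pM2r //.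
split; [|split].
- move=> i; split=> [a|].
    rewrite ffunE addr_ge0 // mulr_ge0 //; first (by rewrite subr_ge0; lra).
      exact: Qs_ge0.
    exact: ltW.
    by case: (Vd_dist (rep s i)) => h _; apply: h.
  under eq_bigr do rewrite ffunE.
  rewrite big_split /= -!mulr_sumr.
  case: (Qs_dist K0 s i) => _ ->; case: (Vd_dist (rep s i)) => _ ->.
  by rewrite !mulr1 subrK.
- move=> i j hc; have [r1 q1] := rep_same tri hc; by apply/ffunP => a; rewrite !ffunE r1 q1.
- move=> i j ng E.
  have rd := rep_diff tri ng.
  case: (eqVneq (Qs s i) (Qs s j)) => [Qij | Qij].
    have := congr1 (fun f : {ffun X -> R} => f a0) E; rewrite !ffunE Qij eqxx (negbTE a01) !mul1r !mul0r !addr0.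
    move/addrI/(mulfI (lt0r_neq0 e0))/cc_inj => h.
    by rewrite h eqxx in rd.
  have [a Ha] : exists a, Qs s i a != Qs s j a.
    case: (boolP [exists a, Qs s i a != Qs s j a]) => [/existsP //|/existsPn H].
    have E2 : Qs s i = Qs s j by apply/ffunP => a; apply/eqP; have := H a; rewrite negbK.
    by rewrite E2 eqxx in Qij.
  have hb := etb _ _ _ Ha.
  have := congr1 (fun f : {ffun X -> R} => f a) E; rewrite /= !Qe_val => Ea.
  have := Vd_dist (rep s i); have := Vd_dist (rep s j).
  move=> [v1 _] [v2 _].
  have u0 := v2 a; have u1 := dist_le1 a (Vd_dist (rep s i)).
  have w0 := v1 a; have w1 := dist_le1 a (Vd_dist (rep s j)).
  move: hb Ea u0 u1 w0 w1.
  set x := Qs s i a; set y := Qs s j a; set u := Vd (rep s i) a; set v := Vd (rep s j) a.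
  move=> hb Ea u0 u1 w0 w1.
  have key : (1 - e) * (x - y) = e * (v - u).
    by rewrite mulrBr mulrBr; lra.
  have hnorm : `|(1 - e) * (x - y)| <= e.
    rewrite key normrM (ger0_norm (ltW e0)) -[X in _ <= X]mulr1.
    apply: ler_wpM2l; [exact: ltW|]; rewrite ler_norml; apply/andP; split; lra.
  rewrite normrM (ger0_norm (_ : 0 <= 1 - e)) in hnorm; last lra.
  have : (1 / 2) * `|x - y| <= (1 - e) * `|x - y|.
    apply: ler_wpM2r => //; lra.
  have : (1 / 2) * eta0 s <= (1 / 2) * `|x - y|.
    by apply: ler_wpM2l => //; lra.
  lra.
Qed.

Lemma Qe_prod s e : 0 <= e <= 1 ->
  (1 - e) ^+ tt * Mval s <= \prod_(i < K) \prod_(x <- xs i) Qe s e i x.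
Proof.
move=> /andP[e0 e1].
have K0' : forall i : 'I_K, (0 < K)%N by move=> [i hi]; exact: (leq_ltn_trans (leq0n i) hi).
apply: (@le_trans _ _ (\prod_(i < K) \prod_(x <- xs i) ((1 - e) * Qs s i x))).
  rewrite /Mval /tt -prodrXr -big_split /= le_eqVlt; apply/orP; left; apply/eqP; apply: eq_bigr => i _.
  by rewrite big_split /= prod_cst_seq size_tuple [X in _ = _ * X]prod_count.
apply: ler_prod => i _; apply/andP; split.
  apply: prodr_ge0 => x _; apply: mulr_ge0; [by rewrite subr_ge0|exact: (Qs_ge0 (K0' i))].
apply: ler_prod => x _; apply/andP; split.
  apply: mulr_ge0; [by rewrite subr_ge0|exact: (Qs_ge0 (K0' i))].
rewrite ffunE lerDl; apply: mulr_ge0 => //.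
by case: (Vd_dist (rep s i)) => h _; apply: h.
Qed.


Lemma Mval_ge0 (K0 : (0 < K)%N) s : 0 <= Mval s.
Proof. by apply: prodr_ge0 => i _; apply: prod_pow_ge0 => a; apply: Qs_ge0. Qed.

Lemma Lik_val (K0 : (0 < K)%N) s : is_hypothesis s -> Lik R s xs = (Mval s)%:E.
Proof.
move=> hs.
have ub : (Lik R s xs <= (Mval s)%:E)%E.
  rewrite /Lik; apply: ge_ereal_sup => _ [Q [Qd [Qc _]] <-].
  by rewrite lee_fin; apply: UB.
have Mge0 := Mval_ge0 K0 s.
have lo : forall d, 0 < d -> ((Mval s - d)%:E <= Lik R s xs)%E.
  move=> d d0; have [et0 [et1 _]] := eta0_prop K0 s.
  set T : R := tt%:R.
  have T0 : 0 <= T by rewrite /T ler0n.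
  have den0 : 0 < T * Mval s + 1 by rewrite ltr_wpDl // mulr_ge0.
  set ep := Num.min (eta0 s / 4) (d / (T * Mval s + 1)).
  have ep0 : 0 < ep by rewrite lt_min !divr_gt0.
  have ep1 : ep <= eta0 s / 4 by rewrite ge_min lexx.
  have ep2 : ep <= d / (T * Mval s + 1) by rewrite ge_min lexx orbT.
  have epeta : ep < eta0 s / 2 by apply: le_lt_trans ep1 _; lra.
  rewrite /Lik; apply: le_ereal_sup_tmp.
  exists (\prod_(i < K) \prod_(x <- xs i) Qe s ep i x)%:E.
    by exists (Qe s ep) => //; apply: Qe_Lambda.
  rewrite lee_fin; apply: le_trans (Qe_prod s _); last first.
    by apply/andP; split; [exact: ltW|lra].
  apply: le_trans (_ : (1 - ep *+ tt) * Mval s <= _); last first.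
    by apply: ler_wpM2r => //; apply: bernoulli_ineq; apply/andP; split; [exact: ltW|lra].
  rewrite -mulr_natr -/T.
  move: ep2; rewrite ler_pdivlMr // => ep2.
  have h : ep * (T * Mval s) <= ep * (T * Mval s + 1) by apply: ler_wpM2l; [exact: ltW|lra].
  rewrite mulrBl mul1r -mulrA; lra.
move: ub lo; case: (Lik R s xs) => [r||] hub hlo.
- congr EFin; apply/le_anti/andP; split; first by rewrite -lee_fin.
  apply/ler_addgt0Pr => d d0; have := hlo d d0; rewrite lee_fin; lra.
- by [].
- by have := hlo 1 ltr01.
Qed.

Lemma Phat_pos i a : (0 < Phat0 i a) = (0 < nn i a)%N.
Proof.
rewrite Phat_val; case: (posnP (nn i a)) => [->|h].
  by rewrite mul0r ltxx.
by rewrite divr_gt0 ?ltr0n.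
Qed.

Lemma Qs_pos (K0 : (0 < K)%N) s i a : (0 < nn i a)%N -> 0 < Qs s i a.
Proof.
move=> h; rewrite /Qs; case: ifP => iC; last by rewrite Phat_pos.
by rewrite Wf_val // divr_gt0 // ltr0n (bigD1 i) ?mem_pblock //= ltn_addr.
Qed.

Definition cst : R := \sum_(i < K) \sum_(a | (0 < nn i a)%N) (nn i a)%:R * ln (Phat0 i a).

Lemma ln_Mval (K0 : (0 < K)%N) s : is_hypothesis s ->
  ln (Mval s) = cst - tt%:R * gfun s Phat0 ww.
Proof.
move=> [_ [tri card2]].
set D := fun i => \sum_(a | (0 < nn i a)%N) (nn i a)%:R * (ln (Phat0 i a) - ln (Qs s i a)).
have hln : ln (Mval s) = \sum_(i < K) \sum_(a | (0 < nn i a)%N) (nn i a)%:R * ln (Qs s i a).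
  rewrite /Mval ln_prod; last first.
    by move=> i _; rewrite prod_restr; apply: prodr_gt0 => b hb;
       apply: exprn_gt0; apply: Qs_pos.
  apply: eq_bigr => i _; rewrite prod_restr ln_prod; last first.
    by move=> a ha; apply: exprn_gt0; apply: Qs_pos.
  by apply: eq_bigr => a ha; rewrite lnXn ?Qs_pos // mulr_natl.
have h1 : cst - ln (Mval s) = \sum_(i < K) D i.
  rewrite hln /cst -sumrB; apply: eq_bigr => i _; rewrite -sumrB.
  by apply: eq_bigr => a _; rewrite mulrBr.
have h2 : \sum_(i < K | i \notin finset.cover s) D i = 0.
  by apply: big1 => i iC; rewrite /D (Qs_out iC); apply: big1 => a _; rewrite subrr mulr0.
have h3 : forall A, A \in s -> tt%:R * Gfun Phat0 ww A = \sum_(i in A) D i.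
  move=> A As.
  have : (0 < #|A|)%N by apply: ltn_trans (card2 _ As).
  case/card_gt0P => j jA.
  have t0 : (tt%:R : R) != 0 by rewrite pnatr_eq0 -lt0n tt_gt0.
  rewrite /Gfun; case: ifP => [/forall_inP/(_ j jA)|_].
    by rewrite /ww mulf_eq0 invr_eq0 (negbTE t0) orbF pnatr_eq0 eqn0Ngt Npos.
  rewrite mulr_sumr; apply: eq_bigr => i iA.
  rewrite /D /KL (Qs_cluster tri As iA) mulrA mulr_sumr.
  rewrite (eq_bigl (fun a => (0 < nn i a)%N)); last by move=> a; rewrite Phat_pos.
  apply: eq_bigr => a ha.
  have Wp : 0 < Wf A a by rewrite -(Qs_cluster tri As iA); apply: Qs_pos.
  have Pp : 0 < Phat0 i a by rewrite Phat_pos.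
  rewrite -ln_div ?posrE //.
  have -> : (Wf A) = [ffun a => (\sum_(i in A) ww i * Phat0 i a) / (\sum_(i in A) ww i)] by [].
  rewrite -/(Wf A) mulrA; congr (_ * _).
  rewrite /ww Phat_val.
  have : (N i)%:R != (0 : R) by rewrite pnatr_eq0 -lt0n Npos.
  move=> hN; field; by rewrite hN t0.
have : tt%:R * gfun s Phat0 ww = \sum_(i < K) D i.
  rewrite (split_sum _ tri) h2 addr0 /gfun mulr_sumr.
  by apply: eq_bigr => A As; apply: h3.
move=> h4; rewrite h4 -h1; lra.
Qed.

Lemma Mval_gt0 (K0 : (0 < K)%N) s : 0 < Mval s.
Proof.
apply: prodr_gt0 => i _; rewrite prod_restr; apply: prodr_gt0 => a ha.
by apply: exprn_gt0; apply: Qs_pos.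
Qed.

End Main.

Unset Implicit Arguments.
Theorem mainTheorem10 (R : realType) (X : finType) (K : nat)
    (C : {set {set {set 'I_K}}})
    (t : nat) (N : 'I_K -> nat) (xs : forall i : 'I_K, (N i).-tuple X)
    (shat : {set {set 'I_K}}) :
  (1 < #|X|)%N -> (1 < K)%N ->
  (1 < #|C|)%N -> (forall s, s \in C -> is_hypothesis s) ->
  (forall i, (0 < N i)%N) -> t = (\sum_(i < K) N i)%N ->
  let Phat : 'I_K -> {ffun X -> R} := fun i => empirical R (xs i) in
  let w : 'I_K -> R := fun i => (N i)%:R / t%:R in
  shat \in C -> (forall s, s \in C -> gfun shat Phat w <= gfun s Phat w) ->
  (forall s, s \in C -> (0 < Lik R s xs)%E /\ (Lik R s xs < +oo)%E) /\
  sup [set Zmin R C s xs | s in [set s | s \in C]]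
    = t%:R * Gmin C shat Phat w - t%:R * gfun shat Phat w /\
  Zmin R C shat xs = sup [set Zmin R C s xs | s in [set s | s \in C]].
Proof.
move=> X2 K1 C2 hypC Npos tdef Phat w shatC shatmin.
have K0 : (0 < K)%N by apply: ltn_trans K1.
case/card_gt1P: X2 => a0 [a1 [_ _ a01]].
set T : R := t%:R.
have T0 : 0 <= T by rewrite /T ler0n.
set g := fun s => gfun s Phat w.
have gE : forall s, g s = gfun s (Phat0 R xs) (ww R N).
  by move=> s; rewrite /g /Phat /w tdef.
have lnE : forall s, s \in C -> ln (Mval R xs s) = cst R xs - T * g s.
  by move=> s sC; rewrite gE (ln_Mval R xs Npos K0 (hypC s sC)) /T tdef.
have ZE : forall s1 s2, s1 \in C -> s2 \in C -> Zstat R s1 s2 xs = T * g s2 - T * g s1.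
  move=> s1 s2 s1C s2C.
  rewrite /Zstat (Lik_val R xs Npos a01 K0 (hypC s1 s1C)) (Lik_val R xs Npos a01 K0 (hypC s2 s2C)) /=.
  rewrite ln_div ?posrE ?(Mval_gt0 R xs Npos K0) // !lnE //; lra.
have Gm : forall s, s \in C -> exists2 s0, s0 \in C :\ s &
    Gmin C s Phat w = g s0 /\ Zmin R C s xs = T * g s0 - T * g s /\
    forall s', s' \in C :\ s -> g s0 <= g s'.
  move=> s sC.
  have [s1 s1D] : exists s1, s1 \in C :\ s.
    apply/set0Pn; rewrite -card_gt0 -(ltn_add2l (s \in C)) -cardsD1 sC.
    by rewrite addn0.
  have [s0 s0D s0min] := argmin_exists g s1D.
  have s0C : s0 \in C by move: s0D; rewrite in_setD1 => /andP[].
  exists s0 => //; split; last split => //.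
    apply: inf_attained; first by exists s0.
    by move=> _ [s' /= hs' <-]; apply: s0min.
  apply: inf_attained; first by exists s0 => //; rewrite ZE.
  move=> _ [s' /= hs' <-].
  have s'C : s' \in C by move: hs'; rewrite in_setD1 => /andP[].
  rewrite ZE // lerD2r; apply: ler_wpM2l => //; exact: s0min.
have [s0 s0D [Gs0 [Zs0 s0min]]] := Gm shat shatC.
have Gge : g shat <= g s0 by apply: shatmin; move: s0D; rewrite in_setD1 => /andP[].
have supE : sup [set Zmin R C s xs | s in [set s | s \in C]] = Zmin R C shat xs.
  apply: sup_attained; first by exists shat.
  move=> _ [s /= sC <-].
  case: (eqVneq s shat) => [-> //|sne].
  have [s2 s2D [Gs2 [Zs2 s2min]]] := Gm s sC.
  have : g s2 <= g shat by apply: s2min; rewrite in_setD1 eq_sym sne shatC.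
  have := shatmin s sC; rewrite -/g => h1 h2.
  rewrite Zs2 Zs0.
  have h3 : T * g s2 <= T * g shat by apply: ler_wpM2l.
  have h4 : T * g shat <= T * g s by apply: ler_wpM2l.
  have h5 : T * g shat <= T * g s0 by apply: ler_wpM2l.
  lra.
split.
  move=> s sC; rewrite (Lik_val R xs Npos a01 K0 (hypC s sC)).
  by rewrite lte_fin (Mval_gt0 R xs Npos K0) ltry.
rewrite supE Zs0 Gs0; split => //.
Qed.
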